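(* Let $G$ be a connected graph on $n\ge 2$ vertices. Then $$\frac{2}{n-1}\le \gamma(G)\le \frac{n}{n-1}.$$ Equality holds in the lower bound if and only if $G$ is isomorphic to the path $P_n$, and equality holds in the upper bound if and only if $G$ is isomorphic to the complete graph $K_n$.
   Context: For a finite simple undirected graph $G$ with $n$ vertices, let $\mathcal{F}=\{x\in\mathbb{R}^{V(G)} : \sum_{v} x_v = 0,\ \|x\|_\infty = 1\}$, for $x\in\mathcal{F}$ let $\gamma_x(G)=\max_{uv\in E(G)}|x_u-x_v|$, and $\gamma(G)=\min_{x\in\mathcal{F}}\gamma_x(G)$. *)

(* Defs.v *)
From mathcomp Require Import all_boot all_order all_algebra.
From mathcomp Require Import boolp classical_sets reals.
Set Implicit Arguments. Unset Strict Implicit. Unset Printing Implicit Defensive.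
Import Order.TTheory GRing.Theory Num.Theory.
Local Open Scope ring_scope.
Local Open Scope classical_set_scope.

Definition simple_graph (T : finType) (e : rel T) : Prop :=
  symmetric e /\ irreflexive e.

Definition connected_graph (T : finType) (e : rel T) : Prop :=
  forall u v : T, connect e u v.

Definition supnorm (R : realType) (T : finType) (x : T -> R) : R :=
  \big[Num.max/0]_(v : T) `|x v|.

Definition Fset (R : realType) (T : finType) : set (T -> R) :=
  [set x | \sum_(v : T) x v = 0 /\ supnorm x = 1].

Definition gamma_x (R : realType) (T : finType) (e : rel T) (x : T -> R) : R :=
  \big[Num.max/0]_(p : T * T | e p.1 p.2) `|x p.1 - x p.2|.

(* gamma(G) = min over x in F of gamma_x(G) (taken as an infimum) *)
Definition gamma (R : realType) (T : finType) (e : rel T) : R :=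
  inf [set gamma_x e x | x in @Fset R T].

Definition iso_path (T : finType) (e : rel T) : Prop :=
  exists f : T -> 'I_#|T|, bijective f /\
    forall u v, e u v = ((f u).+1 == f v) || ((f v).+1 == f u).

Definition iso_complete (T : finType) (e : rel T) : Prop :=
  forall u v, e u v = (u != v).

Arguments gamma R {T} e.

(* Main.v *)
Require Import Defs.
From Stdlib Require Import Classical.
From mathcomp Require Import all_boot all_order all_algebra.
From mathcomp Require Import boolp classical_sets reals.
From mathcomp Require Import zify ring lra.
Set Implicit Arguments. Unset Strict Implicit.
Import Order.TTheory GRing.Theory Num.Theory.
Section S_A.
Local Open Scope ring_scope.

Lemma bmax_ub (R : realType) (I : finType) (P : pred I) (F : I -> R) j :
  P j -> F j <= \big[Num.max/0]_(i | P i) F i.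
Proof. by move=> Pj; rewrite (bigD1 j) //= le_max lexx. Qed.

Lemma bmax_ge0 (R : realType) (I : finType) (P : pred I) (F : I -> R) :
  0 <= \big[Num.max/0]_(i | P i) F i.
Proof. by apply: (big_rec (fun y => 0 <= y)) => //= i x _ hx; rewrite le_max hx orbT. Qed.

Lemma bmax_le (R : realType) (I : finType) (P : pred I) (F : I -> R) c :
  0 <= c -> (forall i, P i -> F i <= c) -> \big[Num.max/0]_(i | P i) F i <= c.
Proof. by move=> c0 h; apply: (big_ind (fun y => y <= c)) => //= x y hx hy; rewrite ge_max hx hy. Qed.

Lemma bmax_att (R : realType) (I : finType) (P : pred I) (F : I -> R) :
  \big[Num.max/0]_(i | P i) F i = 0 \/ exists2 i, P i & \big[Num.max/0]_(i | P i) F i = F i.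
Proof.
apply: (big_ind (fun y => y = 0 \/ exists2 i, P i & y = F i)); first by left.
  by move=> x y hx hy; case: (leP x y).
by move=> i Pi; right; exists i.
Qed.

Lemma sum_eq_le (I : finType) (F G : I -> nat) :
  (forall i, (F i <= G i)%N) -> (\sum_i F i = \sum_i G i)%N -> forall i, F i = G i.
Proof.
move=> h heq j; apply/eqP; rewrite eqn_leq h /=; apply/negP => lt.
move: heq; rewrite (bigD1 j) //= [X in _ = X](bigD1 j) //=.
have : (\sum_(i | i != j) F i <= \sum_(i | i != j) G i)%N by apply: leq_sum.
have := h j; lia.
Qed.
End S_A.
Section S_B.

Fixpoint reach (T : finType) (e : rel T) (i : T) (k : nat) : {set T} :=
  if k is k'.+1 then reach e i k' :|: [set w | [exists u in reach e i k', e u w]]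
  else [set i].
Arguments reach {T} e i k.

Lemma reach_step (T : finType) (e : rel T) i k u w :
  u \in reach e i k -> e u w -> w \in reach e i k.+1.
Proof. by move=> hu huw /=; rewrite inE; apply/orP; right; rewrite inE; apply/existsP; exists u; rewrite hu. Qed.

Lemma reach_last (T : finType) (e : rel T) i p : forall a k,
  path e a p -> a \in reach e i k -> last a p \in reach e i (k + size p).
Proof.
elim: p => [|b p IH] a k /=; first by rewrite addn0.
move=> /andP[hab hp] ha; rewrite addnS -addSn; apply: IH => //.
exact: reach_step ha hab.
Qed.

Lemma reach_ex (T : finType) (e : rel T) i :
  connected_graph e -> forall v, exists k, v \in reach e i k.
Proof.
move=> hc v; have /connectP [p hp ->] := hc i v.
exists (0 + size p)%N; apply: reach_last => //=; exact: set11.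
Qed.

Definition dist (T : finType) (e : rel T) (hc : connected_graph e) i v : nat :=
  ex_minn (reach_ex i hc v).

Lemma dist_in (T : finType) (e : rel T) hc i v : v \in reach e i (@dist T e hc i v).
Proof. by rewrite /dist; case: ex_minnP. Qed.

Lemma dist_min (T : finType) (e : rel T) hc i v k : v \in reach e i k -> (@dist T e hc i v <= k)%N.
Proof. by rewrite /dist; case: ex_minnP => m _ hm /hm. Qed.

Lemma dist_edge (T : finType) (e : rel T) hc i u v : e u v -> (@dist T e hc i v <= (dist hc i u).+1)%N.
Proof. move=> h; apply: dist_min; apply: reach_step h; exact: dist_in. Qed.

Lemma dist_i (T : finType) (e : rel T) hc i : @dist T e hc i i = 0%N.
Proof. by apply/eqP; rewrite -leqn0; apply: dist_min; exact: set11. Qed.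

Lemma dist_pred (T : finType) (e : rel T) hc i v : v != i ->
  exists u, e u v /\ (@dist T e hc i u).+1 = dist hc i v.
Proof.
move=> vi; have := dist_in hc i v.
case Hd: (dist hc i v) => [|k] /=.
  by rewrite inE => /eqP vi'; rewrite vi' eqxx in vi.
rewrite inE => /orP[hk|].
  by have := dist_min hc hk; rewrite Hd ltnn.
rewrite inE => /existsP[u /andP[hu huv]]; exists u; split => //.
have h1 := dist_min hc hu; have h2 := dist_edge hc i huv; lia.
Qed.
End S_B.
Section S_C.
Local Open Scope ring_scope.

Lemma key_pt (R : realType) (T : finType) (e : rel T) (x : T -> R) (b : T -> nat) i d :
  (forall u v, e u v -> `|x u - x v| <= d) -> x i = 1 -> b i = 0%N ->
  (forall v, v != i -> exists u, e u v /\ (b u).+1 = b v) ->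
  forall v, 1 - x v <= (b v)%:R * d.
Proof.
move=> hd xi bi hb v.
have [m] := ubnP (b v); elim: m v => // m IH v hv.
have [->|vi] := eqVneq v i; first by rewrite xi bi subrr mul0r.
have [u [huv hbu]] := hb v vi.
have IHu : 1 - x u <= (b u)%:R * d by apply: IH; rewrite -ltnS hbu.
have := hd u v huv; rewrite -hbu -addn1 natrD mulrDl mul1r.
move=> /(le_trans (ler_norm _)); lra.
Qed.

Lemma key_sum (R : realType) (T : finType) (e : rel T) (x : T -> R) (b : T -> nat) i d :
  (forall u v, e u v -> `|x u - x v| <= d) -> x i = 1 -> b i = 0%N ->
  (forall v, v != i -> exists u, e u v /\ (b u).+1 = b v) ->
  \sum_v x v = 0 ->
  (#|T|%:R : R) <= (\sum_v b v)%:R * d.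
Proof.
move=> hd xi bi hb hs.
have -> : (#|T|%:R : R) = \sum_v (1 - x v).
  rewrite sumrB hs subr0 sumr_const.
  by [].
rewrite natr_sum mulr_suml; apply: ler_sum => v _; exact: key_pt hb v.
Qed.
End S_C.
Section S_D.

Definition rk (T : finType) (b : T -> nat) v := (\sum_w (b w < b v))%N.

Lemma b_le_rk (T : finType) (b : T -> nat) i :
  b i = 0 -> (forall v, v != i -> exists u, (b u).+1 = b v) ->
  forall v, b v <= rk b v.
Proof.
move=> bi hb v; have [m] := ubnP (b v); elim: m v => // m IH v hv.
have [->|vi] := eqVneq v i; first by rewrite bi.
have [u hbu] := hb v vi.
have IHu : b u <= rk b u by apply: IH; rewrite -ltnS hbu.
rewrite -hbu; apply: (leq_trans (n := (rk b u).+1)) => //.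
rewrite /rk (bigD1 u) //= [X in (_ <= X)%N](bigD1 u) //= ltnn -hbu ltnSn add0n add1n ltnS.
apply: leq_sum => w _; case: (ltnP (b w) (b u)) => // h.
by rewrite (ltn_trans h) // -hbu.
Qed.

Lemma sum_neq (T : finType) (v : T) : (\sum_(w : T) (w != v) = #|T|.-1)%N.
Proof.
rewrite (bigD1 v) //= eqxx add0n -(cardC1 v) -sum1_card.
by apply: eq_bigr => w ->.
Qed.

Lemma rk_lt (T : finType) (b : T -> nat) v : rk b v < #|T|.
Proof.
have h0 : 0 < #|T| by apply/card_gt0P; exists v.
suff : rk b v <= #|T|.-1 by lia.
rewrite -(sum_neq v) /rk; apply: leq_sum => w _.
by case: (eqVneq w v) => [->|_]; rewrite ?ltnn ?leq_b1.
Qed.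

Lemma double_rk (T : finType) (b : T -> nat) :
  ((\sum_v rk b v).*2 = \sum_v \sum_w (b w != b v))%N.
Proof.
have ex : (\sum_v rk b v = \sum_v \sum_w (b v < b w))%N by rewrite /rk exchange_big.
rewrite -addnn {2}ex /rk -big_split /=.
apply: eq_bigr => v _; rewrite -big_split /=; apply: eq_bigr => w _.
by case: (ltngtP (b w) (b v)).
Qed.

Lemma even_nn1 n : (n * n.-1 = ((n * n.-1)./2).*2)%N.
Proof.
have h : ~~ odd (n * n.-1) by case: n => //= n; rewrite oddM /=; case: (odd n).
by have := odd_double_half (n * n.-1); rewrite (negbTE h) add0n.
Qed.

Lemma comb (T : finType) (b : T -> nat) i :
  b i = 0 -> (forall v, v != i -> exists u, (b u).+1 = b v) ->
  [/\ (forall v, b v < #|T|),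
      ((\sum_v b v).*2 <= #|T| * #|T|.-1)%N &
      (#|T| * #|T|.-1 < (\sum_v b v).*2 + 2)%N -> forall u v, u != v -> b u != b v].
Proof.
move=> bi hb.
have hle := b_le_rk bi hb.
have s1 : (\sum_v b v <= \sum_v rk b v)%N by apply: leq_sum => v _; exact: hle.
have t1 : forall v w, ((b w != b v) <= (w != v))%N.
  by move=> v w; case: (eqVneq w v) => [->|_]; rewrite ?eqxx ?leq_b1.
have s2 : (\sum_v \sum_w (b w != b v) <= \sum_(v : T) \sum_(w : T) (w != v))%N.
  by apply: leq_sum => v _; apply: leq_sum => w _; exact: t1.
have s3 : (\sum_(v : T) \sum_(w : T) (w != v) = #|T| * #|T|.-1)%N.
  by rewrite (eq_bigr (fun _ => #|T|.-1)) ?sum_nat_const ?card_ord //; move=> v _; exact: sum_neq.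
rewrite -double_rk s3 in s2.
split.
- move=> v; exact: leq_ltn_trans (hle v) (rk_lt b v).
- lia.
- move=> hlt u v uv.
  have ev := even_nn1 #|T|.
  have eq2 : (\sum_v \sum_w (b w != b v) = \sum_(v : T) \sum_(w : T) (w != v))%N.
    rewrite -double_rk s3; lia.
  have t2 : forall v, (\sum_w (b w != b v) <= \sum_(w : T) (w != v))%N.
    by move=> x; apply: leq_sum => w _; exact: t1.
  have e1 := sum_eq_le t2 eq2 v.
  have e2 := sum_eq_le (t1 v) e1 u.
  by move: e2; rewrite uv; case: eqP.
Qed.
End S_D.
Section S_E.
Local Open Scope ring_scope.

Lemma gx_edge (R : realType) (T : finType) (e : rel T) (x : T -> R) u v :
  e u v -> `|x u - x v| <= gamma_x e x.
Proof. by move=> h; rewrite /gamma_x; exact: (@bmax_ub R _ (fun p : T * T => e p.1 p.2) (fun p => `|x p.1 - x p.2|) (u, v)). Qed.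

Lemma gx_ge0 (R : realType) (T : finType) (e : rel T) (x : T -> R) : 0 <= gamma_x e x.
Proof. exact: bmax_ge0. Qed.

Lemma gx_le (R : realType) (T : finType) (e : rel T) (x : T -> R) c :
  0 <= c -> (forall u v, e u v -> `|x u - x v| <= c) -> gamma_x e x <= c.
Proof. by move=> c0 h; apply: bmax_le => // p hp; exact: h. Qed.

Lemma F_pt (R : realType) (T : finType) (x : T -> R) :
  Fset x -> exists i, x i = 1 \/ x i = -1.
Proof.
move=> [_ hs]; move: hs; rewrite /supnorm.
case: (bmax_att xpredT (fun v => `|x v|)) => [->|[i _ ->]].
  by move/eqP; rewrite eq_sym oner_eq0.
move=> h; exists i; case: (ler0P (x i)) => hx.
  by have := ler0_norm hx; rewrite h => hh; right; rewrite -[x i]opprK -hh.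
by left; rewrite -h gtr0_norm.
Qed.

Lemma lower_x (R : realType) (T : finType) (e : rel T) (hc : connected_graph e) (x : T -> R) :
  Fset x -> exists i, (#|T|%:R : R) <= (\sum_v dist hc i v)%:R * gamma_x e x.
Proof.
move=> hF; have [i hi] := F_pt hF; exists i; case: hF => hs _.
have hp : forall v, v != i -> exists u, e u v /\ (dist hc i u).+1 = dist hc i v.
  by move=> v; exact: dist_pred.
have hE : forall u v, e u v -> `|x u - x v| <= gamma_x e x.
  by move=> u v; exact: gx_edge.
case: hi => hi.
  exact: (key_sum (e:=e) (x := x) (b := dist hc i) (i := i) hE hi (dist_i hc i) hp hs).
have hE' : forall u v, e u v -> `|(- x u) - (- x v)| <= gamma_x e x.
  move=> u v huv; rewrite (_ : - x u - - x v = - (x u - x v)) ?normrN; [exact: hE|ring].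
have hi' : - x i = 1 by rewrite hi opprK.
have hs' : \sum_v - x v = 0 by rewrite sumrN hs oppr0.
exact: (key_sum (e:=e) (x := fun v => - x v) (b := dist hc i) (i := i) hE' hi' (dist_i hc i) hp hs').
Qed.

Lemma gamma_lb (R : realType) (T : finType) (e : rel T) (c : R) (x0 : T -> R) :
  Fset x0 -> (forall x, Fset x -> c <= gamma_x e x) -> c <= gamma R e.
Proof.
move=> h0 h; apply: lb_le_inf; first by exists (gamma_x e x0); exists x0.
by move=> y [x hx <-]; exact: h.
Qed.

Lemma gamma_ub (R : realType) (T : finType) (e : rel T) (x : T -> R) :
  Fset x -> gamma R e <= gamma_x e x.
Proof.
move=> hx; apply: ge_inf; last by exists x.
by exists 0 => y [z _ <-]; exact: gx_ge0.
Qed.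
End S_E.
Section S_F.
Local Open Scope ring_scope.

Lemma natr_pred (R : realType) n : (0 < n)%N -> (n.-1%:R : R) = n%:R - 1.
Proof. by move=> h; rewrite -{2}(prednK h) -natr1 addrK. Qed.

Lemma sum_eq1 (R : realType) (T : finType) (a : T) : \sum_v ((v == a)%:R : R) = 1.
Proof. by rewrite (bigD1 a) //= eqxx big1 ?addr0 // => v /negbTE ->. Qed.

Lemma supnorm_eq1 (R : realType) (T : finType) (x : T -> R) i :
  (forall v, `|x v| <= 1) -> `|x i| = 1 -> supnorm x = 1.
Proof.
move=> h hi; apply/le_anti/andP; split; first by apply: bmax_le.
by rewrite -{1}hi; exact: (@bmax_ub R T xpredT (fun v => `|x v|) i).
Qed.

Lemma star_ok (R : realType) (T : finType) (e : rel T) (i : T) :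
  (2 <= #|T|)%N ->
  let m : R := #|T|%:R in
  let xs := fun v => 1 - (v != i)%:R * (m / (m - 1)) in
  Fset xs /\ gamma_x e xs <= m / (m - 1).
Proof.
move=> h2 m xs.
have m2 : 2 <= m by rewrite /m (ler_nat R 2).
set c := m / (m - 1).
have hc : (m - 1) * c = m by rewrite /c mulrC divfK //; apply/eqP => h; lra.
have c1 : 1 < c.
  rewrite /c ltr_pdivlMr; lra.
have c2 : c <= 2.
  rewrite /c ler_pdivrMr; lra.
split; first split.
- rewrite /xs sumrB sumr_const -mulr_suml -natr_sum.
  have -> : (\sum_v (v != i))%N = #|T|.-1 by exact: sum_neq.
  rewrite natr_pred; last by lia.
  rewrite hc /m. by rewrite subrr.
- apply: (@supnorm_eq1 R T xs i); last by rewrite /xs eqxx mul0r subr0 normr1.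
  move=> v; rewrite /xs -/c; case: (v != i); rewrite ?mul0r ?mul1r ?subr0 ?normr1 //.
  rewrite ler0_norm; lra.
- apply: gx_le; first lra.
  move=> u v _; rewrite /xs -/c; case: (u != i); case: (v != i);
    rewrite ?mul0r ?mul1r ?subr0 ?subrr ?normr0; try lra.
  + by rewrite (_ : 1 - c - 1 = - c) ?normrN ?ger0_norm; [|lra|ring].
  + by rewrite (_ : 1 - (1 - c) = c) ?ger0_norm; [|lra|ring].
Qed.
End S_F.
Section S_G.
Local Open Scope ring_scope.

Lemma noncomp_ok (R : realType) (T : finType) (e : rel T) (u0 v0 : T) :
  symmetric e -> u0 != v0 -> ~~ e u0 v0 ->
  let xn := fun v => ((v == u0)%:R - (v == v0)%:R : R) in
  Fset xn /\ gamma_x e xn <= 1.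
Proof.
move=> hs uv ne xn; split; first split.
- by rewrite /xn sumrB !sum_eq1 subrr.
- apply: (@supnorm_eq1 R T xn u0); last by rewrite /xn eqxx (negbTE uv) subr0 normr1.
  move=> v; rewrite /xn; case: (v == u0); case: (v == v0);
    rewrite ?subrr ?subr0 ?sub0r ?normrN ?normr1 ?normr0 //.
- have huv0 : (u0 == v0) = false by exact: negbTE.
  have hv0u : (v0 == u0) = false by rewrite eq_sym; exact: negbTE.
  apply: gx_le => // u v; rewrite /xn.
  have [->|hu] := eqVneq u u0; have [->|hv] := eqVneq v v0;
  rewrite ?eqxx => huv.
  + by rewrite huv in ne.
  + by case: (v == u0); rewrite /= ?huv0 ?hv0u ?mulr1n ?mulr0n ?subrr ?subr0 ?sub0r ?opprK ?normrN ?normr0 ?normr1.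
  + by case: (u == v0); rewrite /= ?huv0 ?hv0u ?mulr1n ?mulr0n ?subrr ?subr0 ?sub0r ?opprK ?normrN ?normr0 ?normr1.
  + have [eu|hu1] := eqVneq u v0; have [ev|hv1] := eqVneq v u0.
    * by move: huv; rewrite eu ev hs (negbTE ne).
    * by rewrite /= ?huv0 ?hv0u ?mulr1n ?mulr0n ?subrr ?subr0 ?sub0r ?opprK ?normrN ?normr0 ?normr1.
    * by rewrite /= ?huv0 ?hv0u ?mulr1n ?mulr0n ?subrr ?subr0 ?sub0r ?opprK ?normrN ?normr0 ?normr1.
    * by rewrite /= ?huv0 ?hv0u ?mulr1n ?mulr0n ?subrr ?subr0 ?sub0r ?opprK ?normrN ?normr0 ?normr1.
Qed.
End S_G.
Section S_H.
Local Open Scope ring_scope.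

Lemma sum_ord_double n : ((\sum_(k < n) (k : nat)).*2 = n * n.-1)%N.
Proof.
elim: n => [|n IH]; first by rewrite big_ord0.
rewrite big_ord_recr /= doubleD IH; case: n {IH} => [|n] //=; lia.
Qed.

Lemma path_ok (R : realType) (T : finType) (e : rel T) (f : T -> 'I_#|T|) :
  bijective f -> (forall u v, e u v = ((f u).+1 == f v) || ((f v).+1 == f u)) ->
  (2 <= #|T|)%N ->
  let m : R := #|T|%:R in
  let xp := fun v => 1 - (f v : nat)%:R * (2 / (m - 1)) in
  Fset xp /\ gamma_x e xp <= 2 / (m - 1).
Proof.
move=> [g fg gf] he h2 m xp.
have m2 : 2 <= m by rewrite /m (ler_nat R 2).
set c := 2 / (m - 1).
have hc : (m - 1) * c = 2 by rewrite /c mulrC divfK //; apply/eqP => h; lra.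
have c0 : 0 < c by rewrite /c divr_gt0 //; lra.
have hsum : (\sum_v (f v : nat) = \sum_(k < #|T|) (k : nat))%N.
  rewrite (reindex g) /=; first by apply: eq_bigr => k _; rewrite gf.
  by exists f => k _; rewrite ?fg ?gf.
have hS : ((\sum_v (f v : nat))%:R : R) * 2 = m * (m - 1).
  rewrite hsum -natrM muln2 sum_ord_double natrM natr_pred //; lia.
have hfv : forall v, ((f v : nat)%:R : R) <= m - 1.
  move=> v; rewrite -natr_pred; last by lia.
  by rewrite ler_nat; have := ltn_ord (f v); lia.
split; first split.
- rewrite /xp -/c sumrB sumr_const -mulr_suml -natr_sum.
  have m1 : m - 1 != 0 by apply/eqP => h; lra.
  have hSc : ((\sum_v (f v : nat))%:R : R) * c = m.
    apply: (mulIf m1) => /=; rewrite -mulrA [c * _]mulrC hc hS; ring.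
  rewrite hSc.
  by rewrite subrr.
- have h0 : (0 < #|T|)%N by lia.
  apply: (@supnorm_eq1 R T xp (g (Ordinal h0))); last first.
    by rewrite /xp gf /= mul0r subr0 normr1.
  move=> v; rewrite /xp -/c.
  have := hfv v; have : 0 <= ((f v : nat)%:R : R) by [].
  set a := ((f v : nat)%:R : R) => ha hb.
  have hac : a * c <= 2 by rewrite -hc ler_wpM2r // ltW.
  have hac0 : 0 <= a * c by rewrite mulr_ge0 // ltW.
  rewrite ler_norml; apply/andP; split; lra.
- apply: gx_le; first exact: ltW.
  move=> u v; rewrite he /xp -/c => /orP[] /eqP h.
  + rewrite -h -addn1 natrD mulrDl mul1r.
    rewrite (_ : _ - _ = c); first by rewrite ger0_norm // ltW.
    ring.
  + rewrite -h -addn1 natrD mulrDl mul1r.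
    rewrite (_ : _ - _ = - c); first by rewrite normrN ger0_norm // ltW.
    ring.
Qed.
End S_H.
Section S_M.
Local Open Scope ring_scope.

Lemma mk_path (T : finType) (e : rel T) (hc : connected_graph e) i :
  simple_graph e ->
  (forall u v, u != v -> dist hc i u != dist hc i v) ->
  (forall v, (dist hc i v < #|T|)%N) -> iso_path e.
Proof.
move=> [hs hirr] hinj hlt.
pose f v := Ordinal (hlt v).
have finj : injective f.
  move=> u v /(congr1 val) /= h; apply/eqP; apply/negPn/negP => /hinj.
  by rewrite h eqxx.
exists f; split; first by apply: inj_card_bij => //; rewrite card_ord.
move=> u v /=; apply/idP/idP.
  move=> huv; have uv : u != v by apply/negP => /eqP eq; rewrite eq hirr in huv.
  have h1 := dist_edge hc i huv; rewrite hs in huv; have h2 := dist_edge hc i huv.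
  have h3 := hinj _ _ uv.
  case: (ltngtP (dist hc i u) (dist hc i v)) h3 => h //= _.
    by apply/orP; left; apply/eqP; lia.
  by apply/orP; right; apply/eqP; lia.
have key : forall u v, (dist hc i u).+1 = dist hc i v -> e u v.
  move=> a b hab.
  have bi : b != i by apply/negP => /eqP eb; move: hab; rewrite eb dist_i.
  have [w [hw hwb]] := dist_pred hc bi.
  have : w == a by apply/negPn/negP => /hinj; rewrite -(eqn_add2r 1) !addn1 hwb hab eqxx.
  by move/eqP => <-.
by case/orP => /eqP h; [exact: key | rewrite hs; exact: key].
Qed.

Lemma lower_full (R : realType) (T : finType) (e : rel T) (hc : connected_graph e) (x : T -> R) :
  simple_graph e -> Fset x -> exists i,
    [/\ (#|T|%:R : R) <= (\sum_v dist hc i v)%:R * gamma_x e x,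
        ((\sum_v dist hc i v).*2 <= #|T| * #|T|.-1)%N &
        (~ iso_path e -> ((\sum_v dist hc i v).*2 + 2 <= #|T| * #|T|.-1)%N)].
Proof.
move=> hsg hF; have [i hi] := lower_x hc hF; exists i.
have hp : forall v, v != i -> exists u, (dist hc i u).+1 = dist hc i v.
  by move=> v hv; have [u [_ hu]] := dist_pred hc hv; exists u.
have [hlt h2 hinj] := comb (dist_i hc i) hp.
split => // np; rewrite leqNgt; apply/negP => hh.
by apply: np; apply: (mk_path (hc := hc) (i := i)) => //; exact: hinj.
Qed.
End S_M.
Section S_M2.
Local Open Scope ring_scope.

End S_M2.
Local Open Scope ring_scope.
Theorem theorem4p7 (R : realType) (T : finType) (e : rel T) :
  simple_graph e -> connected_graph e -> (2 <= #|T|)%N ->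
  let n : R := #|T|%:R in
  [/\ 2 / (n - 1) <= gamma R e,
      gamma R e <= n / (n - 1),
      gamma R e = 2 / (n - 1) <-> iso_path e
    & gamma R e = n / (n - 1) <-> iso_complete e].
Proof.
move=> hsg hc h2 n.
have [hsym hirr] := hsg.
have n2 : 2 <= n by rewrite /n (ler_nat R 2).
have hpos : (0 < #|T|)%N by lia.
have [i0 _] : exists i0 : T, i0 \in T by apply/card_gt0P.
have [hF0 hg0] := star_ok R e i0 h2.
set x0 := fun v => _ in hF0 hg0.
set q := 2 / (n - 1).
set r := n / (n - 1).
have n1 : 0 < n - 1 by lra.
have hq : q * (n - 1) = 2 by rewrite /q divfK //; apply/lt0r_neq0.
have hr : r * (n - 1) = n by rewrite /r divfK //; apply/lt0r_neq0.
have hNR : forall a : nat, (a.*2 <= #|T| * #|T|.-1)%N -> 2 * (a%:R : R) <= n * (n - 1).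
  move=> a ha; rewrite -natr_pred // /n -!natrM ler_nat; lia.
have hNR2 : forall a : nat, (a.*2 + 2 <= #|T| * #|T|.-1)%N -> 2 * (a%:R : R) + 2 <= n * (n - 1).
  move=> a ha; rewrite -natr_pred // /n -!natrM -natrD ler_nat; lia.
have LBx : forall x, Fset x -> q <= gamma_x e x.
  move=> x hx; have [i [h1 h2' _]] := lower_full hc hsg hx.
  have := hNR _ h2'; move: h1; set S := ((\sum_v _)%:R : R) => h1 hS.
  have g0 := gx_ge0 e x.
  rewrite /q ler_pdivrMr //.
  have : 2 * n <= n * (n - 1) * gamma_x e x by nra.
  move=> h; nra.
have LB : q <= gamma R e by apply: (gamma_lb hF0).
have UB : gamma R e <= r by apply: le_trans (gamma_ub e hF0) hg0.
split => //.
- split.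
  + move=> hg; apply: NNPP => np.
    set D := n * (n - 1) - 2.
    have LBx2 : forall x, Fset x -> 2 * n <= D * gamma_x e x.
      move=> x hx; have [i [h1 _ h3]] := lower_full hc hsg hx.
      have := hNR2 _ (h3 np); move: h1; set S := ((\sum_v _)%:R : R) => h1 hS.
      have g0 := gx_ge0 e x.
      rewrite /D; nra.
    have D0 : 0 < D.
      have h := LBx2 _ hF0; have g0 := gx_ge0 e x0.
      rewrite ltNge; apply/negP => hD.
      have : D * gamma_x e x0 <= 0 by rewrite mulr_le0_ge0.
      lra.
    have : (2 * n) / D <= gamma R e.
      apply: (gamma_lb hF0) => x hx; rewrite ler_pdivrMr // [_ * D]mulrC; exact: LBx2.
    rewrite hg ler_pdivrMr // => h.
    have : q * D = 2 * n - 2 * q by rewrite /D; nra.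
    have q0 : 0 < q by rewrite /q divr_gt0 //; lra.
    lra.
  + move=> [f [fb fe]].
    have [hF hgp] := path_ok R fb fe h2.
    apply/le_anti; rewrite LB andbT; exact: le_trans (gamma_ub e hF) hgp.
- split.
  + move=> hg; apply: NNPP => nc.
    have [u /not_all_ex_not [v huv]] := not_all_ex_not _ _ nc.
    have uv : u != v by apply/negP => /eqP eq; apply: huv; rewrite eq hirr eqxx.
    have ne : ~~ e u v by apply/negP => h; apply: huv; rewrite h uv.
    have [hF hgn] := noncomp_ok R hsym uv ne.
    have : gamma R e <= 1 by exact: le_trans (gamma_ub e hF) hgn.
    rewrite hg => h; nra.
  + move=> hcomp; apply/le_anti; rewrite UB /=.
    apply: (gamma_lb hF0) => x hx.
    have [i [h1 _ _]] := lower_full hc hsg hx.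
    have hS : ((\sum_v dist hc i v)%N <= #|T|.-1)%N.
      rewrite -(sum_neq i); apply: leq_sum => v _.
      case: (eqVneq v i) => [->|vi]; first by rewrite dist_i.
      have := dist_edge hc i (u := i) (v := v); rewrite hcomp eq_sym vi dist_i => /(_ isT).
      by [].
    have : ((\sum_v dist hc i v)%:R : R) <= n - 1 by rewrite -natr_pred // ler_nat.
    move: h1; set S := ((\sum_v _)%:R : R) => h1 hS'.
    have g0 := gx_ge0 e x.
    rewrite /r ler_pdivrMr //; nra.
Qed.
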